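(* Let $1\le p<\infty$ and $\alpha>0$, and consider the differentiation operator $Df=f'$ on $\mathcal{F}^p_{(\alpha,1)}$ (where it is bounded). Then the closed disc $\{\lambda\in\mathbb{C}:|\lambda|\le\alpha\}$ is contained in the spectrum $\sigma(D)$ of $D$ on $\mathcal{F}^p_{(\alpha,1)}$.
   Context: For $\alpha>0$, $m>0$ and $1\le p<\infty$, $\mathcal{F}^p_{(\alpha,m)}$ denotes the Banach space of entire functions $f$ on $\mathbb{C}$ with $\|f\|_{(p,\alpha,m)}^p=\int_{\mathbb{C}}|f(z)|^pe^{-p\alpha|z|^m}\,dA(z)<\infty$, where $dA$ is Lebesgue area measure. *)

(* Defs.v *)
From HB Require Import structures.
From mathcomp Require Import all_boot all_order all_algebra.
From mathcomp Require Import all_classical all_reals all_analysis.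
From mathcomp.real_closed Require Import complex.
Set Implicit Arguments. Unset Strict Implicit. Unset Printing Implicit Defensive.
Import Order.TTheory GRing.Theory Num.Theory.
Import numFieldNormedType.Exports.
Local Open Scope ring_scope.
Local Open Scope classical_set_scope.

(* The complex plane is modelled as R[i] = complex R for R : realType;
   R[i] is a numClosedFieldType, hence a normed field over itself, so that
   complex differentiability is MathComp-Analysis' [derivable f z 1]. *)

Definition cmod (R : realType) (z : R[i]) : R :=
  Num.sqrt (complex.Re z ^+ 2 + complex.Im z ^+ 2).

Definition entire (R : realType) (f : R[i] -> R[i]) : Prop :=
  forall z : R[i], derivable (f : (R[i])^o -> (R[i])^o) z 1.

Definition Dop (R : realType) (f : R[i] -> R[i]) : R[i] -> R[i] :=
  fun z => 'D_1 (f : (R[i])^o -> (R[i])^o) z.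

(* integrand of ||f||^p_{(p,alpha,m)}, written in cartesian coordinates
   z = x + i y, so that dA(z) is Lebesgue measure on R x R *)
Definition fock_integrand (R : realType) (p alpha m : R) (f : R[i] -> R[i])
  (xy : R * R) : \bar R :=
  let z : R[i] := (xy.1 +i* xy.2)%C in
  ((cmod (f z) `^ p) * expR (- (p * alpha * (cmod z `^ m))))%:E.

Definition fock_pnorm (R : realType) (p alpha m : R) (f : R[i] -> R[i]) : \bar R :=
  (\int[(@lebesgue_measure R \x @lebesgue_measure R)%E]_(xy in setT)
     fock_integrand p alpha m f xy)%E.

Definition in_Fock (R : realType) (p alpha m : R) (f : R[i] -> R[i]) : Prop :=
  entire f /\ (fock_pnorm p alpha m f < +oo)%E.

(* the norm ||f||_{(p,alpha,m)} (real-valued, meaningful on F^p_{(alpha,m)}) *)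
Definition fock_norm (R : realType) (p alpha m : R) (f : R[i] -> R[i]) : R :=
  fine (fock_pnorm p alpha m f) `^ p^-1.

Definition bounded_op_on_Fock (R : realType) (p alpha m : R)
  (T : (R[i] -> R[i]) -> (R[i] -> R[i])) : Prop :=
  [/\ (forall f, in_Fock p alpha m f -> in_Fock p alpha m (T f)),
      (forall (a : R[i]) f g, in_Fock p alpha m f -> in_Fock p alpha m g ->
          T (fun z => a * f z + g z) = (fun z => a * T f z + T g z)) &
      (exists M : R, forall f, in_Fock p alpha m f ->
          fock_norm p alpha m (T f) <= M * fock_norm p alpha m f)].

Definition in_spectrum_Fock (R : realType) (p alpha m : R)
  (T : (R[i] -> R[i]) -> (R[i] -> R[i])) (lambda : R[i]) : Prop :=
  ~ exists S : (R[i] -> R[i]) -> (R[i] -> R[i]),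
      [/\ bounded_op_on_Fock p alpha m S,
          (forall f, in_Fock p alpha m f ->
              S (fun z => T f z - lambda * f z) = f) &
          (forall f, in_Fock p alpha m f ->
              (fun z => T (S f) z - lambda * S f z) = f)].

(* Main.v *)
Require Import Defs.
From HB Require Import structures.
From mathcomp Require Import all_boot all_order all_algebra.
From mathcomp Require Import all_classical all_reals all_analysis.
From mathcomp.real_closed Require Import complex.
From mathcomp Require Import measurable_realfun.
From mathcomp Require Import ring lra.
Import Order.TTheory GRing.Theory Num.Theory.
Import numFieldNormedType.Exports.
Local Open Scope ring_scope.

Module Helpers.
Set Implicit Arguments. Unset Strict Implicit. Unset Printing Implicit Defensive.
Local Open Scope complex_scope.
Local Open Scope classical_set_scope.
Local Open Scope ring_scope.
Section S.
Variable R : realType.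
Lemma normcE (z : R[i]) : `|z| = (cmod z)%:C.
Proof. by rewrite normc_def. Qed.
Lemma cmodM (a b : R[i]) : cmod (a * b) = cmod a * cmod b.
Proof. apply: complexI; rewrite rmorphM /= -!normcE; exact: normrM. Qed.
Lemma cmod_ge0 (a : R[i]) : 0 <= cmod a.
Proof. exact: sqrtr_ge0. Qed.
Lemma cmodD (a b : R[i]) : cmod (a + b) <= cmod a + cmod b.
Proof. rewrite -lecR rmorphD /= -!normcE; exact: ler_normD. Qed.
Lemma cmodN (a : R[i]) : cmod (- a) = cmod a.
Proof. apply: complexI; rewrite -!normcE; exact: normrN. Qed.
Lemma cmod1 : cmod (1 : R[i]) = 1.
Proof. apply: complexI; rewrite -!normcE; exact: normr1. Qed.
Lemma cmodR (x : R) : cmod x%:C = `|x|.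
Proof. by rewrite /cmod /= expr0n /= addr0 sqrtr_sqr. Qed.
Lemma Re_le_cmod (a : R[i]) : `|complex.Re a| <= cmod a.
Proof. rewrite /cmod -sqrtr_sqr ler_sqrt ?lerDl ?sqr_ge0 //; exact: addr_ge0 (sqr_ge0 _) (sqr_ge0 _). Qed.
Lemma Im_le_cmod (a : R[i]) : `|complex.Im a| <= cmod a.
Proof. rewrite /cmod -sqrtr_sqr ler_sqrt ?lerDr ?sqr_ge0 //; exact: addr_ge0 (sqr_ge0 _) (sqr_ge0 _). Qed.
Lemma cmod_le (a : R[i]) : cmod a <= `|complex.Re a| + `|complex.Im a|.
Proof.
set u := `|complex.Re a|; set v := `|complex.Im a|.
have hu : 0 <= u by exact: normr_ge0. have hv : 0 <= v by exact: normr_ge0.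
have e : complex.Re a ^+ 2 + complex.Im a ^+ 2 = u ^+ 2 + v ^+ 2.
  by rewrite /u /v !real_normK ?num_real.
rewrite /cmod e.
have -> : u + v = Num.sqrt ((u + v) ^+ 2) by rewrite sqrtr_sqr ger0_norm ?addr_ge0.
rewrite ler_sqrt; last by rewrite sqr_ge0.
rewrite sqrrD -addrA lerD2l lerDr mulrn_wge0 // mulr_ge0 //.
Qed.
End S.

Section S2.
Variable R : realType.
Definition Ec (w : R[i]) : R[i] :=
  (expR (complex.Re w) * cos (complex.Im w)) +i* (expR (complex.Re w) * sin (complex.Im w)).
Lemma EcD (a b : R[i]) : Ec (a + b) = Ec a * Ec b.
Proof.
case: a => a1 a2; case: b => b1 b2; rewrite /Ec /=.
rewrite expRD cosD sinD; apply/eqP; rewrite eq_complex /=; apply/andP; split; apply/eqP; ring.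
Qed.
Lemma Ec0 : Ec 0 = 1.
Proof. by rewrite /Ec /= expR0 cos0 sin0 mul1r mulr0. Qed.
Lemma cmodEc (w : R[i]) : cmod (Ec w) = expR (complex.Re w).
Proof.
rewrite /cmod /Ec /= !exprMn -mulrDr addrC.
rewrite sin2cos2 subrK mulr1 sqrtr_sqr ger0_norm // expR_ge0.
Qed.
End S2.

Section S3.
Variable R : realType.
Lemma mvt0 (f df : R -> R) (x : R) :
  (forall t : R, is_derive t (1:R) f (df t)) ->
  exists c, `|c| <= `|x| /\ f x - f 0 = df c * x.
Proof.
move=> hd.
have cf (a b : R) : {within `[a, b], continuous f}.
  by apply: derivable_within_continuous => t _; exact: ex_derive.
have [x0|x0] := leP 0 x.
  have [c] := @MVT_segment R f df 0 x x0 (fun t _ => hd t) (cf _ _).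
  rewrite in_itv /= => /andP[c0 cx] e; exists c; split; last by rewrite e subr0.
  by rewrite !ger0_norm.
have [c] := @MVT_segment R f df x 0 (ltW x0) (fun t _ => hd t) (cf _ _).
rewrite in_itv /= => /andP[c0 cx] e; exists c; split.
  by rewrite !ler0_norm ?(ltW x0) // lerN2.
by rewrite -opprB e sub0r mulrN opprK.
Qed.
End S3.

Section S4.
Variable R : realType.
Let K0 : R := expR 1.
Lemma K0_ge1 : 1 <= K0. Proof. by rewrite /K0 -expR0 ler_expR. Qed.
Lemma bnd_expm1 (x : R) : `|x| <= 1 -> `|expR x - 1| <= K0 * `|x|.
Proof.
move=> hx; have [c [hc e]] := @mvt0 R expR expR x (fun t => is_derive_expR t).
rewrite -[X in expR x - X]expR0 e normrM ger0_norm ?expR_ge0 // ler_wpM2r //.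
rewrite /K0 ler_expR (le_trans (ler_norm c)) // (le_trans hc) //.
Qed.
Lemma bnd_expm1x (x : R) : `|x| <= 1 -> `|expR x - 1 - x| <= K0 * x ^+ 2.
Proof.
move=> hx.
have hd t : is_derive t (1:R) (fun t => expR t - t) (expR t - 1).
  exact: is_deriveB.
have [c [hc e]] := @mvt0 R _ _ x hd.
have -> : expR x - 1 - x = (expR c - 1) * x by rewrite -e /= expR0 subr0; ring.
rewrite normrM.
have -> : x ^+ 2 = `|x| * `|x| by rewrite -normrM -expr2 ger0_norm ?sqr_ge0.
rewrite mulrA ler_wpM2r //.
rewrite (le_trans (bnd_expm1 _)) ?ler_wpM2l // ?(le_trans hc) //.
by rewrite /K0 expR_ge0.
Qed.
Lemma bnd_sin (y : R) : `|sin y| <= `|y|.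
Proof.
have [c [hc e]] := @mvt0 R sin cos y (fun t => is_derive_sin t).
rewrite -(subr0 (sin y)) -[X in sin y - X]sin0 e normrM; apply: ler_piMl => //; exact: cos_max.
Qed.
Lemma bnd_cos (y : R) : `|cos y - 1| <= y ^+ 2.
Proof.
have [c [hc e]] := @mvt0 R cos (fun t => - sin t) y (fun t => is_derive_cos t).
rewrite -[X in cos y - X]cos0 e normrM normrN.
have -> : y ^+ 2 = `|y| * `|y| by rewrite -normrM -expr2 ger0_norm ?sqr_ge0.
rewrite ler_wpM2r //.
exact: le_trans (bnd_sin c) hc.
Qed.
Lemma bnd_sinx (y : R) : `|y| <= 1 -> `|sin y - y| <= y ^+ 2.
Proof.
move=> hy.
have hd t : is_derive t (1:R) (fun t => sin t - t) (cos t - 1).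
  exact: is_deriveB.
have [c [hc e]] := @mvt0 R _ _ y hd.
have -> : sin y - y = (cos c - 1) * y by rewrite -e /= sin0 !subr0.
rewrite normrM.
have -> : y ^+ 2 = `|y| * `|y| by rewrite -normrM -expr2 ger0_norm ?sqr_ge0.
rewrite ler_wpM2r // (le_trans (bnd_cos c)) //.
have hc1 : `|c| <= 1 := le_trans hc hy.
have -> : c ^+ 2 = `|c| * `|c| by rewrite -normrM -expr2 ger0_norm ?sqr_ge0.
by rewrite (le_trans _ hc) // ler_piMl.
Qed.

Lemma bnd_Ec (w : R[i]) : cmod w <= 1 ->
  cmod (Ec w - 1 - w) <= (3 * K0 + 1) * cmod w ^+ 2.
Proof.
move=> hw; case: w hw => x y hw.
set r := cmod (x +i* y).
have hx : `|x| <= r by exact: (Re_le_cmod (x +i* y)).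
have hy : `|y| <= r by exact: (Im_le_cmod (x +i* y)).
have r0 : 0 <= r by exact: cmod_ge0.
have hx1 : `|x| <= 1 := le_trans hx hw.
have hy1 : `|y| <= 1 := le_trans hy hw.
have ex : expR x <= K0 by rewrite /K0 ler_expR (le_trans (ler_norm x)).
have ex0 : 0 <= expR x := expR_ge0 x.
apply: le_trans (cmod_le _) _.
rewrite /Ec /=.
set A := (expR x * cos y - 1 - x).
set B := (expR x * sin y - y).
have hA : A = (expR x - 1 - x) + expR x * (cos y - 1) by rewrite /A; ring.
have hB : B = (expR x - 1) * sin y + (sin y - y) by rewrite /B; ring.
have x2 : x ^+ 2 <= r ^+ 2.
  by rewrite -real_normK ?num_real // lerXn2r // nnegrE.
have y2 : y ^+ 2 <= r ^+ 2.
  by rewrite -(real_normK (num_real y)) lerXn2r // nnegrE.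
have nA : `|A| <= 2 * K0 * r ^+ 2.
  rewrite hA (le_trans (ler_normD _ _)) // normrM ger0_norm //.
  have h1 := bnd_expm1x hx1; have h2 := bnd_cos y.
  have h3 : expR x * `|cos y - 1| <= K0 * y ^+ 2.
    by apply: ler_pM => //; exact: normr_ge0.
  have K00 : 0 <= K0 by rewrite /K0 expR_ge0.
  have h4 : K0 * x ^+ 2 <= K0 * r ^+ 2 by rewrite ler_wpM2l.
  have h5 : K0 * y ^+ 2 <= K0 * r ^+ 2 by rewrite ler_wpM2l.
  lra.
have nB : `|B| <= (K0 + 1) * r ^+ 2.
  rewrite hB (le_trans (ler_normD _ _)) // normrM.
  have h1 := bnd_expm1 hx1; have h2 := bnd_sin y; have h3 := bnd_sinx hy1.
  have K00 : 0 <= K0 by rewrite /K0 expR_ge0.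
  have h4 : `|expR x - 1| * `|sin y| <= (K0 * `|x|) * `|y|.
    by apply: ler_pM => //; exact: normr_ge0.
  have h5 : (K0 * `|x|) * `|y| <= K0 * r ^+ 2.
    rewrite -mulrA ler_wpM2l // expr2; apply: ler_pM => //; exact: normr_ge0.
  lra.
rewrite subr0 -/B; lra.
Qed.
End S4.

Section S5.
Variable R : realType.
Lemma cmodV (h : R[i]) : h != 0 -> cmod h^-1 = (cmod h)^-1.
Proof.
move=> h0; have := cmodM h h^-1; rewrite mulfV // cmod1 => e.
have ch : cmod h != 0.
  apply: contra h0 => /eqP ch; by rewrite -normr_eq0 normcE ch.
by apply: (mulfI ch); rewrite -e mulfV.
Qed.
Definition fE (c mu : R[i]) : R[i]^o -> R[i]^o := fun w => c * Ec (mu * w).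
Lemma cvg_quot (c mu z : R[i]) :
  (fun h : R[i]^o => h^-1 *: ((fE c mu \o shift z) (h *: (1:R[i]^o)) - fE c mu z))
     @ (0:R[i]^o)^' --> (c * mu * Ec (mu * z) : R[i]^o).
Proof.
apply/cvgrPdist_le => -[e ei]; rewrite ltcE /= => /andP[/eqP ei0 e0].
subst ei.
have e0' : e +i* 0 = e%:C by [].
set K : R := 3 * expR 1 + 1.
set C0 := cmod (c * Ec (mu * z)).
have K0 : 0 < K by rewrite /K addr_gt0 // mulr_gt0 // expR_gt0.
have C00 : 0 <= C0 by exact: cmod_ge0.
have m0 : 0 <= cmod mu by exact: cmod_ge0.
set d1 := (cmod mu + 1)^-1.
set d2 := e / (C0 * K * cmod mu ^+ 2 + 1).
have d10 : 0 < d1 by rewrite invr_gt0 ltr_pwDr.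
have d20 : 0 < d2 by rewrite divr_gt0 // ltr_pwDr // mulr_ge0 // ?mulr_ge0 ?sqr_ge0 // ltW.
set d := Num.min d1 d2.
have d0 : 0 < d by rewrite lt_min d10 d20.
near=> h.
have hne : h != 0 by near: h; exact: nbhs_dnbhs_neq.
have hd : `|h| < d%:C by near: h; apply: dnbhs0_lt; rewrite ltcR.
rewrite normcE ltcR in hd.
have sE (a b : R[i]) : (a *: (b : R[i]^o)) = a * b by [].
rewrite /fE /= !sE mulr1.
have -> : Ec (mu * (h + z)) = Ec (mu * h) * Ec (mu * z).
  by rewrite -EcD; congr Ec; rewrite mulrDr.
rewrite normcE e0' lecR.
have -> : c * mu * Ec (mu * z) - h^-1 * (c * (Ec (mu * h) * Ec (mu * z)) - c * Ec (mu * z))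
   = - (c * Ec (mu * z)) * h^-1 * (Ec (mu * h) - 1 - mu * h).
  by field.
rewrite !cmodM cmodN cmodV // -/C0.
set r := cmod h.
have r0 : 0 < r.
  rewrite lt_neqAle cmod_ge0 andbT eq_sym; apply: contra hne => /eqP r0.
  by rewrite -normr_eq0 normcE -/r r0.
have hd1 : r <= d1 by apply: le_trans (ltW hd) _; rewrite ge_min lexx.
have hd2 : r <= d2 by apply: le_trans (ltW hd) _; rewrite ge_min lexx orbT.
have hmh : cmod (mu * h) <= 1.
  rewrite cmodM -/r; apply: le_trans (ler_wpM2l m0 hd1) _.
  rewrite /d1 ler_pdivrMr ?ltr_pwDr // mul1r lerDl //.
have := bnd_Ec hmh; rewrite -/K cmodM -/r => hb.
apply: le_trans (ler_wpM2l _ hb) _; first by rewrite divr_ge0 // ltW.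
have -> : C0 / r * (K * (cmod mu * r) ^+ 2) = (C0 * K * cmod mu ^+ 2) * r.
  by field; rewrite gt_eqF.
have hC : 0 <= C0 * K * cmod mu ^+ 2 by rewrite !mulr_ge0 // ?sqr_ge0 // ltW.
apply: le_trans (ler_wpM2l hC hd2) _.
rewrite /d2 mulrA ler_pdivrMr ?ltr_pwDr //.
rewrite mulrC ler_wpM2l ?(ltW e0) // lerDl //.
Unshelve. all: by end_near.
Qed.
Lemma fE_derive (c mu z : R[i]) :
  is_derive (z : R[i]^o) (1 : R[i]^o) (fE c mu) (c * mu * Ec (mu * z)).
Proof.
have h := @cvg_quot c mu z.
split; first exact: cvgP h.
exact: cvg_lim h.
Qed.
Lemma fE_entire (c mu : R[i]) : entire (fun z => c * Ec (mu * z)).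
Proof. move=> z; exact: (@ex_derive _ _ _ _ _ _ _ (fE_derive c mu z)). Qed.
Lemma fE_Dop (c mu : R[i]) z : Dop (fun z => c * Ec (mu * z)) z = c * mu * Ec (mu * z).
Proof. exact: (@derive_val _ _ _ _ _ _ _ (fE_derive c mu z)). Qed.
End S5.

Section S6.
Variable R : realType.
Definition gE (p alpha : R) (mu : R[i]) (xy : R * R) : R :=
  expR (p * (complex.Re mu * xy.1 - complex.Im mu * xy.2)) *
  expR (- (p * alpha * Num.sqrt (xy.1 ^+ 2 + xy.2 ^+ 2))).
Lemma integrand_fE (p alpha : R) (c mu : R[i]) (xy : R * R) :
  fock_integrand p alpha 1 (fun z => c * Ec (mu * z)) xy =
  (cmod c `^ p * gE p alpha mu xy)%:E.
Proof.
rewrite /fock_integrand /gE; congr EFin.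
rewrite cmodM cmodEc powRM ?cmod_ge0 ?expR_ge0 // -expRM powRr1 ?cmod_ge0 //.
rewrite -mulrA; congr (_ * (_ * _)).
case: mu => a b /=; congr expR; rewrite mulrC; congr (_ * _); ring.
Qed.
Lemma gE_ge0 p alpha mu xy : 0 <= gE p alpha mu xy.
Proof. by rewrite /gE mulr_ge0 ?expR_ge0. Qed.
Lemma measurable_gE p alpha mu : measurable_fun setT (gE p alpha mu).
Proof.
rewrite /gE.
apply: measurable_realfun.measurable_funM.
  apply: measurableT_comp; first exact: measurable_realfun.measurable_expR.
  apply: measurable_realfun.measurable_funM; first exact: measurable_cst.
  apply: measurable_realfun.measurable_funB.
    apply: measurable_realfun.measurable_funM; [exact: measurable_cst| exact: measurable_fst].
  apply: measurable_realfun.measurable_funM; [exact: measurable_cst| exact: measurable_snd].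
apply: measurableT_comp; first exact: measurable_realfun.measurable_expR.
apply: measurable_realfun.measurable_funN.
apply: measurable_realfun.measurable_funM; first exact: measurable_cst.
have -> : (fun xy : R * R => Num.sqrt (xy.1 ^+ 2 + xy.2 ^+ 2)) =
   (fun xy : R * R => (xy.1 ^+ 2 + xy.2 ^+ 2) `^ 2^-1).
  by apply/funext => xy; rewrite powR12_sqrt // addr_ge0 ?sqr_ge0.
apply: (measurableT_comp (f := fun x : R => x `^ 2^-1) (g := fun xy : R * R => xy.1 ^+ 2 + xy.2 ^+ 2)).
  exact: measurable_realfun.measurable_powR.
apply: measurable_realfun.measurable_funD; apply: measurable_realfun.measurable_funX; [exact: measurable_fst|exact: measurable_snd].
Qed.
End S6.

Section S7.
Variable R : realType.
Local Notation mu := (@lebesgue_measure R).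
Definition ek (k : R) (x : R) : R := expR (- (k * `|x|)).
Lemma ek_ge0 k x : 0 <= ek k x. Proof. exact: expR_ge0. Qed.
Lemma continuous_ek k : continuous (ek k).
Proof.
move=> x; apply: continuous_comp; last exact: continuous_expR.
apply: (@continuousN _ R^o); apply: continuousM; first exact: cst_continuous.
exact: norm_continuous.
Qed.
Lemma measurable_ek k : measurable_fun setT (ek k).
Proof.
apply: (measurableT_comp (f := expR) (g := fun x : R => - (k * `|x|))).
  exact: measurable_realfun.measurable_expR.
apply: measurable_realfun.measurable_funN.
apply: measurable_realfun.measurable_funM; first exact: measurable_cst.
exact: measurable_realfun.normr_measurable.
Qed.
Lemma int_ek_pos (k : R) : 0 < k ->
  (\int[mu]_(x in `[0%R, +oo[%classic) (ek k x)%:E <= (k^-1)%:E)%E.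
Proof.
move=> k0.
have mpdf : measurable_fun [set: R] ((fun x : R => (exponential_pdf k x)%:E) : R -> \bar R).
  by apply/measurable_EFinP; exact: measurable_exponential_pdf.
have -> : (\int[mu]_(x in `[0%R, +oo[%classic) (ek k x)%:E =
    \int[mu]_(x in `[0%R, +oo[%classic) ((k^-1)%:E * (exponential_pdf k x)%:E))%E.
  apply: eq_integral => x; rewrite inE /= in_itv /= andbT => x0.
  rewrite /ek exponential_pdfE // /= -EFinM mulrA mulVf ?gt_eqF // mul1r.
  by rewrite ger0_norm // mulNr.
rewrite ge0_integralZl_EFin //; last 3 first.
- by move=> x _; rewrite lee_fin exponential_pdf_ge0 // ltW.
- exact: measurable_funS mpdf.
- by rewrite ltW // invr_gt0.
rewrite -[X in (_ <= X)%E]mule1; apply: lee_wpmul2l.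
  by rewrite lee_fin invr_ge0 ltW.
rewrite -(integral_exponential_pdf k0).
apply: ge0_subset_integral => //.
by move=> x _; rewrite lee_fin exponential_pdf_ge0 // ltW.
Qed.
Lemma int_ek (k : R) : 0 < k ->
  (\int[mu]_x (ek k x)%:E <= (k^-1 + k^-1)%:E)%E.
Proof.
move=> k0.
have mek : measurable_fun [set: R] (fun x : R => (ek k x)%:E).
  by apply/measurable_EFinP; exact: measurable_ek.
have ek0 : forall x, (0 <= (ek k x)%:E)%E by move=> x; rewrite lee_fin ek_ge0.
rewrite -(setUv `[0%R, +oo[%classic) ge0_integral_setU //; last 3 first.
- exact: measurableC.
- by rewrite setUv.
- exact/disj_setPCl.
rewrite EFinD; apply: leeD; first exact: int_ek_pos.
have hN : (\int[mu]_(x in `]-oo, (- 0)%R]%classic) (ek k x)%:E =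
    \int[mu]_(x in `[0%R, +oo[%classic) ((ek k \o -%R) x)%:E)%E.
  apply: ge0_integration_by_substitutionNy.
    exact: continuous_subspaceT (@continuous_ek k).
  by move=> x _; exact: ek_ge0.
rewrite oppr0 in hN.
apply: le_trans (int_ek_pos k0).
apply: le_trans (_ : (_ <= \int[mu]_(x in `]-oo, 0%R]%classic) (ek k x)%:E)%E) _.
  apply: ge0_subset_integral => //; first exact: measurableC.
    exact: measurable_funS mek.
  move=> x /=; rewrite in_itv /= andbT => /negP; rewrite -ltNge => x0.
  by rewrite in_itv /= ltW.
rewrite hN le_eqVlt; apply/orP; left; apply/eqP; apply: eq_integral => x _.
by rewrite /ek /= normrN.
Qed.
End S7.

Section S8.
Variable R : realType.
Local Notation mu := (@lebesgue_measure R).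
Local Notation mu2 := ((@lebesgue_measure R) \x (@lebesgue_measure R))%E.

Lemma gE_le_ek (p alpha : R) (m : R[i]) (xy : R * R) : 0 < p -> cmod m < alpha ->
  gE p alpha m xy <= ek (p * (alpha - cmod m) / 2) xy.1 * ek (p * (alpha - cmod m) / 2) xy.2.
Proof.
move=> p0 ma; case: xy => x y /=.
rewrite /gE /ek /= -!expRD ler_expR.
have m0 : 0 <= cmod m by exact: cmod_ge0.
set r := Num.sqrt (x ^+ 2 + y ^+ 2).
have rE : r = cmod (x +i* y) by [].
have hx : `|x| <= r by rewrite rE; exact: (Re_le_cmod (x +i* y)).
have hy : `|y| <= r by rewrite rE; exact: (Im_le_cmod (x +i* y)).
have hre : complex.Re m * x - complex.Im m * y <= cmod m * r.
  have -> : complex.Re m * x - complex.Im m * y = complex.Re (m * (x +i* y)).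
    by clear; case: m => a b /=.
  rewrite rE -cmodM; apply: le_trans (ler_norm _) _; exact: Re_le_cmod.

have h1 : p * (complex.Re m * x - complex.Im m * y) <= p * (cmod m * r) by rewrite ler_wpM2l // ltW.
set k := p * (alpha - cmod m).
have k0 : 0 <= k by rewrite /k; apply: mulr_ge0; [exact: ltW | rewrite subr_ge0; exact: ltW].
have h2 : k / 2 * (`|x| + `|y|) <= k * r.
  rewrite -mulrA ler_wpM2l //; lra.
have -> : p * (complex.Re m * x - complex.Im m * y) - p * alpha * r =
   p * (complex.Re m * x - complex.Im m * y) - p * (cmod m * r) - k * r by rewrite /k; ring.
have -> : - (k / 2 * `|x|) - k / 2 * `|y| = - (k / 2 * (`|x| + `|y|)) by ring.
lra.
Qed.
Lemma int_gE_fin (p alpha : R) (m : R[i]) : 0 < p -> cmod m < alpha ->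
  (\int[mu2]_(xy in setT) (gE p alpha m xy)%:E < +oo)%E.
Proof.
move=> p0 ma.
set k := p * (alpha - cmod m) / 2.
have k0 : 0 < k by rewrite /k divr_gt0 // mulr_gt0 // subr_gt0.
have mg : measurable_fun setT (fun xy : R * R => (gE p alpha m xy)%:E).
  by apply/measurable_EFinP; exact: measurable_gE.
set h := fun xy : R * R => (ek k xy.1 * ek k xy.2)%:E.
have mh : measurable_fun setT h.
  apply/measurable_EFinP; apply: measurable_realfun.measurable_funM.
    exact: (measurableT_comp (measurable_ek k) measurable_fst).
  exact: (measurableT_comp (measurable_ek k) measurable_snd).
have h0 : forall xy, (0 <= h xy)%E by move=> xy; rewrite lee_fin mulr_ge0 ?ek_ge0.
apply: le_lt_trans (_ : _ <= \int[mu2]_(xy in setT) h xy)%E _.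
  apply: ge0_le_integral => //.
    by move=> xy _; rewrite lee_fin gE_ge0.
  by move=> xy _; rewrite lee_fin; exact: gE_le_ek.
rewrite (@fubini_tonelli1 _ _ _ _ _ mu mu h mh h0).
set J := (\int[mu]_y (ek k y)%:E)%E.
have J0 : (0 <= J)%E by apply: integral_ge0 => y _; rewrite lee_fin ek_ge0.
have Jf : J \is a fin_num.
  by rewrite ge0_fin_numE // (le_lt_trans (int_ek k0)) // ltry.
have mek : measurable_fun [set: R] (fun x : R => (ek k x)%:E).
  by apply/measurable_EFinP; exact: measurable_ek.
under eq_integral => x _.
  rewrite /fubini_F /h /=.
  under eq_integral do rewrite EFinM.
  rewrite ge0_integralZl_EFin //; last 2 first.
  - by move=> y _; rewrite lee_fin ek_ge0.
  - exact: ek_ge0.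
  rewrite -/J -(fineK Jf) -EFinM mulrC.
  over.
under eq_integral do rewrite EFinM.
rewrite ge0_integralZl_EFin //; last 2 first.
- by move=> y _; rewrite lee_fin ek_ge0.
- by rewrite fine_ge0.
by rewrite -/J -(fineK Jf) -EFinM ltry.
Qed.
Lemma gE_lb (p alpha : R) (m : R[i]) (x y : R) : 0 < p -> 0 <= alpha ->
  `|x| + `|y| <= 2 ->
  expR (- (2 * p * (cmod m + alpha))) <= gE p alpha m (x, y).
Proof.
move=> p0 a0 hxy.
rewrite /gE /= -expRD ler_expR.
set r := Num.sqrt (x ^+ 2 + y ^+ 2).
have rE : r = cmod (x +i* y) by [].
have hr : r <= 2 by rewrite rE; exact: (le_trans (cmod_le (x +i* y)) hxy).
have r0 : 0 <= r by exact: sqrtr_ge0.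
have m0 : 0 <= cmod m by exact: cmod_ge0.
have hre : - (cmod m * r) <= complex.Re m * x - complex.Im m * y.
  have -> : complex.Re m * x - complex.Im m * y = complex.Re (m * (x +i* y)).
    by clear; case: m => a b /=.
  rewrite rE -cmodM lerNl.
  apply: le_trans (_ : _ <= `|complex.Re (m * (x +i* y))|) _.
    by rewrite -normrN ler_norm.
  exact: Re_le_cmod.
have h1 : p * (- (cmod m * r)) <= p * (complex.Re m * x - complex.Im m * y) by rewrite ler_wpM2l // ltW.
have h2 : p * (cmod m + alpha) * r <= p * (cmod m + alpha) * 2.
  have pm0 : 0 <= p * (cmod m + alpha) by apply: mulr_ge0; lra.
  by rewrite ler_wpM2l.
have -> : p * alpha * r = p * (cmod m + alpha) * r - p * (cmod m * r) by ring.
lra.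
Qed.

Lemma int_gE_pos (p alpha : R) (m : R[i]) : 0 < p -> 0 <= alpha ->
  (0 < \int[mu2]_(xy in setT) (gE p alpha m xy)%:E)%E.
Proof.
move=> p0 a0.
set c := expR (- (2 * p * (cmod m + alpha))).
set I01 := `[0%R, 1%R]%classic : set R.
have mI : measurable I01 by rewrite /I01; exact: measurable_itv.
have mA : measurable (I01 `*` I01) by exact: measurableX.
have mg : measurable_fun setT (fun xy : R * R => (gE p alpha m xy)%:E).
  by apply/measurable_EFinP; exact: measurable_gE.
have muI : mu I01 = 1%E.
  rewrite /I01 lebesgue_measure_itv /=.
  by rewrite ifT ?lte_fin ?ltr01 // oppr0 adde0.
apply: lt_le_trans (_ : (0 < c%:E * mu2 (I01 `*` I01))%E) _.
  rewrite product_measure1E //.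
  change (0%R < c%:E * (mu I01 * mu I01))%E.
  by rewrite muI !mule1 lte_fin expR_gt0.
rewrite -integral_cst //.
apply: le_trans (_ : _ <= \int[mu2]_(xy in I01 `*` I01) (gE p alpha m xy)%:E)%E _.
  apply: ge0_le_integral => //.
  - by move=> xy _; rewrite lee_fin expR_ge0.
  - exact: (measurable_funS measurableT (@subsetT _ _) mg).
  move=> [x y] [/= hx hy]; rewrite lee_fin; apply: gE_lb => //.
  move: hx hy; rewrite /I01 /= !in_itv /= => /andP[x0 x1] /andP[y0 y1].
  rewrite !ger0_norm //; lra.
apply: ge0_subset_integral => //.
by move=> xy _; rewrite lee_fin gE_ge0.
Qed.
End S8.

Section S9.
Variable R : realType.
Local Notation mu2 := ((@lebesgue_measure R) \x (@lebesgue_measure R))%E.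
Definition Ig (p alpha : R) (m : R[i]) : \bar R :=
  (\int[mu2]_(xy in setT) (gE p alpha m xy)%:E)%E.

Lemma pnorm_fE (p alpha : R) (c m : R[i]) :
  fock_pnorm p alpha 1 (fun z => c * Ec (m * z)) = ((cmod c `^ p)%:E * Ig p alpha m)%E.
Proof.
rewrite /fock_pnorm /Ig.
under eq_integral do rewrite integrand_fE EFinM.
rewrite ge0_integralZl_EFin //.
- by move=> xy _; rewrite lee_fin gE_ge0.
- by apply/measurable_EFinP; exact: measurable_gE.
- exact: powR_ge0.
Qed.

Lemma Ig_fin (p alpha : R) (m : R[i]) : 0 < p -> cmod m < alpha -> Ig p alpha m \is a fin_num.
Proof.
move=> p0 ma; rewrite ge0_fin_numE; first exact: int_gE_fin.
by apply: integral_ge0 => xy _; rewrite lee_fin gE_ge0.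
Qed.

Lemma in_Fock_fE (p alpha : R) (c m : R[i]) : 0 < p -> cmod m < alpha ->
  in_Fock p alpha 1 (fun z => c * Ec (m * z)).
Proof.
move=> p0 ma; split; first exact: fE_entire.
by rewrite pnorm_fE -(fineK (Ig_fin p0 ma)) -EFinM ltry.
Qed.

Lemma norm_fE (p alpha : R) (c m : R[i]) : 0 < p -> cmod m < alpha ->
  fock_norm p alpha 1 (fun z => c * Ec (m * z)) = cmod c * (fine (Ig p alpha m) `^ p^-1).
Proof.
move=> p0 ma.
rewrite /fock_norm pnorm_fE -(fineK (Ig_fin p0 ma)) -EFinM /=.
rewrite powRM ?powR_ge0 //; last first.
  by rewrite fine_ge0 // integral_ge0 // => xy _; rewrite lee_fin gE_ge0.
by rewrite -powRrM mulfV ?gt_eqF // powRr1 // cmod_ge0.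
Qed.

Lemma N_gt0 (p alpha : R) (m : R[i]) : 0 < p -> 0 <= alpha -> cmod m < alpha ->
  0 < fine (Ig p alpha m) `^ p^-1.
Proof.
move=> p0 a0 ma; apply: powR_gt0.
have := int_gE_pos m p0 a0; rewrite -/(Ig p alpha m) -(fineK (Ig_fin p0 ma)).
by rewrite lte_fin.
Qed.
End S9.

End Helpers.
Import Helpers.

Theorem mainTheorem3 (R : realType) (p alpha : R) (hp : 1 <= p) (halpha : 0 < alpha)
  (lambda : R[i]) (hlambda : cmod lambda <= alpha) :
  in_spectrum_Fock p alpha 1 (@Dop R) lambda.
Proof.
move=> [S [[_ _ [M HM]] Hleft _]].
have p0 : 0 < p by apply: lt_le_trans hp.
set d : R := (alpha * `|M| + 2)^-1.
have dpos : 0 < d by rewrite invr_gt0 ltr_wpDl // mulr_ge0 // ltW.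
have dd : d * (alpha * `|M| + 2) = 1 by rewrite mulVf // gt_eqF // ltr_wpDl // mulr_ge0 // ltW.
have aM : 0 <= alpha * `|M| by rewrite mulr_ge0 // ltW.
have dM : 0 <= d * (alpha * `|M|) by rewrite mulr_ge0 // ltW.
have dd' : d * (alpha * `|M|) + d * 2 = 1 by rewrite -mulrDr.
have d1 : d < 1 by lra.
set m := (((1 - d)%:C)%C * lambda).
have l0 : 0 <= cmod lambda by exact: cmod_ge0.
have cm : cmod m = (1 - d) * cmod lambda by rewrite /m cmodM cmodR ger0_norm // subr_ge0 ltW.
have ma : cmod m < alpha.
  rewrite cm; have : d * cmod lambda <= d * alpha by rewrite ler_wpM2l // ltW.
  have : d * alpha > 0 by rewrite mulr_gt0.
  nra.
have cml : cmod (m - lambda) = d * cmod lambda.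
  have -> : m - lambda = ((- d)%:C)%C * lambda by rewrite /m; rewrite rmorphN rmorphB /= rmorph1; ring.
  by rewrite cmodM cmodR normrN ger0_norm // ltW.
set e := fun z : R[i] => 1 * Ec (m * z).
have eF : in_Fock p alpha 1 e by exact: in_Fock_fE.
have gE' : (fun z => Dop e z - lambda * e z) = (fun z => (m - lambda) * Ec (m * z)).
  apply/funext => z; rewrite /e fE_Dop; ring.
have gF : in_Fock p alpha 1 (fun z => Dop e z - lambda * e z).
  rewrite gE'; exact: in_Fock_fE.
have := HM _ gF; rewrite (Hleft _ eF) gE' /e !norm_fE // cmod1 mul1r cml.
set N := fine (Ig p alpha m) `^ p^-1.
have N0 : 0 < N by apply: N_gt0 => //; exact: ltW.
move=> h.
have hM : M * (d * cmod lambda) <= `|M| * (d * alpha).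
  apply: le_trans (ler_norm _) _; rewrite normrM (ger0_norm (mulr_ge0 (ltW dpos) l0)).
  by rewrite ler_wpM2l // ler_wpM2l // ltW.
have h2 : `|M| * (d * alpha) < 1.
  have : d * (alpha * `|M|) < 1 by lra.
  by have -> : `|M| * (d * alpha) = d * (alpha * `|M|) by ring.
have : M * (d * cmod lambda) < 1 by apply: le_lt_trans hM h2.
move=> h3.
have : M * (d * cmod lambda) * N < N by rewrite gtr_pMl.
lra.
Qed.
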